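(* Let $\varphi(u,v)$ be a (twice continuously differentiable) solution of the equation $$\varphi_{uu}+\varphi_{vv}+\frac{1}{v}\varphi_v=0$$ on an open set $D\subset\{(u,v)\in\mathbb{R}^2: v\neq 0\}$. Then for any pair of conjugate harmonic functions $u(x,y),v(x,y)$ on an open set $\Omega\subset\mathbb{R}^2$ (i.e. $u_x=v_y$, $u_y=-v_x$) with $(u(x,y),v(x,y))\in D$ for $(x,y)\in\Omega$, the function $\psi(x,y)=\varphi(u(x,y),v(x,y))$ satisfies $$(v\,\psi_x)_x+(v\,\psi_y)_y=0\quad\text{on }\Omega .$$ *)

(* Defs.v *)
From Stdlib Require Import Reals.
From Coquelicot Require Import Coquelicot.
Open Scope R_scope.

Definition unc (f : R -> R -> R) : R * R -> R := fun p => f (fst p) (snd p).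

Definition pDx (f : R -> R -> R) : R -> R -> R :=
  fun x y => Derive (fun t => f t y) x.
Definition pDy (f : R -> R -> R) : R -> R -> R :=
  fun x y => Derive (fun t => f x t) y.

Definition C2_on (U : R * R -> Prop) (f : R -> R -> R) : Prop :=
  forall x y, U (x, y) ->
    ex_derive (fun t => f t y) x /\ ex_derive (fun t => f x t) y /\
    ex_derive (fun t => pDx f t y) x /\ ex_derive (fun t => pDx f x t) y /\
    ex_derive (fun t => pDy f t y) x /\ ex_derive (fun t => pDy f x t) y /\
    continuous (unc f) (x, y) /\
    continuous (unc (pDx f)) (x, y) /\ continuous (unc (pDy f)) (x, y) /\
    continuous (unc (pDx (pDx f))) (x, y) /\ continuous (unc (pDy (pDx f))) (x, y) /\
    continuous (unc (pDx (pDy f))) (x, y) /\ continuous (unc (pDy (pDy f))) (x, y).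

(* Main.v *)
Require Import Defs.
From Stdlib Require Import Reals Lra.
From Coquelicot Require Import Coquelicot.
Open Scope R_scope.

Lemma diff_of (U : R*R -> Prop) f a b : open U -> U (a,b) ->
  (forall x y, U (x,y) -> ex_derive (fun t => f t y) x) ->
  ex_derive (fun t => f a t) b -> continuous (unc (pDx f)) (a,b) ->
  differentiable_pt_lim f a b (pDx f a b) (pDy f a b).
Proof.
  intros HU Hab Hx Hy Hc.
  apply filterdiff_differentiable_pt_lim.
  eapply filterdiff_ext_lin.
  - apply (is_derive_filterdiff f a b (pDx f) (pDy f a b)).
    + apply (filter_imp U); [|now apply HU].
      intros [p q] Hpq. simpl. apply Derive_correct. now apply Hx.
    + apply Derive_correct. exact Hy.
    + exact Hc.
  - intros [p q]. simpl. reflexivity.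
Qed.

Lemma loc_x (U : R*R -> Prop) x y : open U -> U (x,y) -> locally x (fun t => U (t,y)).
Proof.
  intros HU H. apply (locally_2d_1d_const_y (fun a b => U (a,b))).
  apply locally_2d_locally. apply (filter_imp U). intros [p q]; auto. now apply HU.
Qed.
Lemma loc_y (U : R*R -> Prop) x y : open U -> U (x,y) -> locally y (fun t => U (x,t)).
Proof.
  intros HU H. apply (locally_2d_1d_const_x (fun a b => U (a,b))).
  apply locally_2d_locally. apply (filter_imp U). intros [p q]; auto. now apply HU.
Qed.

Lemma chain (g h : R -> R) (G : R -> R -> R) t lx ly dg dh :
  differentiable_pt_lim G (g t) (h t) lx ly ->
  is_derive g t dg -> is_derive h t dh ->
  is_derive (fun s => G (g s) (h s)) t (lx * dg + ly * dh).
Proof.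
  intros H1 H2 H3. apply is_derive_Reals.
  apply derivable_pt_lim_comp_2d; auto; now apply is_derive_Reals.
Qed.

Lemma is_derive_eq (f : R -> R) x l l' : is_derive f x l -> l = l' -> is_derive f x l'.
Proof. intros H ->; exact H. Qed.

Lemma dplus (f g : R -> R) x a b : is_derive f x a -> is_derive g x b ->
  is_derive (fun t => f t + g t) x (a + b).
Proof. intros; now apply (is_derive_plus f g). Qed.
Lemma dmult (f g : R -> R) x a b : is_derive f x a -> is_derive g x b ->
  is_derive (fun t => f t * g t) x (a * g x + f x * b).
Proof. intros; now apply (is_derive_mult f g); [| |intros; apply Rmult_comm]. Qed.

Theorem lemma1 (D Om : R * R -> Prop) (phi u v : R -> R -> R) :
  open D ->
  (forall a b, D (a, b) -> b <> 0) ->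
  C2_on D phi ->
  (forall a b, D (a, b) ->
     pDx (pDx phi) a b + pDy (pDy phi) a b + / b * pDy phi a b = 0) ->
  open Om ->
  C2_on Om u -> C2_on Om v ->
  (forall x y, Om (x, y) ->
     pDx (pDx u) x y + pDy (pDy u) x y = 0 /\ pDx (pDx v) x y + pDy (pDy v) x y = 0) ->
  (forall x y, Om (x, y) ->
     pDx u x y = pDy v x y /\ pDy u x y = - pDx v x y) ->
  (forall x y, Om (x, y) -> D (u x y, v x y)) ->
  let psi := fun x y => phi (u x y) (v x y) in
  forall x y, Om (x, y) ->
    ex_derive (fun t => v t y * pDx psi t y) x /\
    ex_derive (fun t => v x t * pDy psi x t) y /\
    Derive (fun t => v t y * pDx psi t y) x
      + Derive (fun t => v x t * pDy psi x t) y = 0.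
Proof.
  intros HD Hnz Hphi Heq HOm Hu Hv Hlap HCR Hmap psi x y Hxy.
  assert (Hd0 : forall a b, D (a,b) -> differentiable_pt_lim phi a b (pDx phi a b) (pDy phi a b)).
  { intros a b Hab. apply (diff_of D); auto.
    - intros p q Hpq. apply (Hphi p q Hpq).
    - apply (Hphi a b Hab).
    - apply (Hphi a b Hab). }
  assert (HdX : forall a b, D (a,b) -> differentiable_pt_lim (pDx phi) a b (pDx (pDx phi) a b) (pDy (pDx phi) a b)).
  { intros a b Hab. apply (diff_of D); auto.
    - intros p q Hpq. apply (Hphi p q Hpq).
    - apply (Hphi a b Hab).
    - apply (Hphi a b Hab). }
  assert (HdY : forall a b, D (a,b) -> differentiable_pt_lim (pDy phi) a b (pDx (pDy phi) a b) (pDy (pDy phi) a b)).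
  { intros a b Hab. apply (diff_of D); auto.
    - intros p q Hpq. apply (Hphi p q Hpq).
    - apply (Hphi a b Hab).
    - apply (Hphi a b Hab). }
  assert (Hpx : forall t s, Om (t,s) -> pDx psi t s =
     pDx phi (u t s) (v t s) * pDx u t s + pDy phi (u t s) (v t s) * pDx v t s).
  { intros t s Hts. unfold pDx at 1. apply is_derive_unique.
    apply (chain (fun r => u r s) (fun r => v r s) phi t); auto.
    - apply Derive_correct, (Hu t s Hts).
    - apply Derive_correct, (Hv t s Hts). }
  assert (Hpy : forall t s, Om (t,s) -> pDy psi t s =
     pDx phi (u t s) (v t s) * pDy u t s + pDy phi (u t s) (v t s) * pDy v t s).
  { intros t s Hts. unfold pDy at 1. apply is_derive_unique.
    apply (chain (fun r => u t r) (fun r => v t r) phi s); auto.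
    - apply Derive_correct, (Hu t s Hts).
    - apply Derive_correct, (Hv t s Hts). }
  destruct (Hu x y Hxy) as (ux & uy & uxx & uxy & uyx & uyy & _).
  destruct (Hv x y Hxy) as (vx & vy & vxx & vxy & vyx & vyy & _).
  assert (dvx : is_derive (fun t => v t y) x (pDx v x y)) by (apply Derive_correct; exact vx).
  assert (dvy : is_derive (fun t => v x t) y (pDy v x y)) by (apply Derive_correct; exact vy).
  assert (dux : is_derive (fun t => u t y) x (pDx u x y)) by (apply Derive_correct; exact ux).
  assert (duy : is_derive (fun t => u x t) y (pDy u x y)) by (apply Derive_correct; exact uy).
  assert (duxx : is_derive (fun t => pDx u t y) x (pDx (pDx u) x y)) by (apply Derive_correct; exact uxx).
  assert (duyy : is_derive (fun t => pDy u x t) y (pDy (pDy u) x y)) by (apply Derive_correct; exact uyy).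
  assert (dvxx : is_derive (fun t => pDx v t y) x (pDx (pDx v) x y)) by (apply Derive_correct; exact vxx).
  assert (dvyy : is_derive (fun t => pDy v x t) y (pDy (pDy v) x y)) by (apply Derive_correct; exact vyy).
  pose proof (Hmap x y Hxy) as HDp.
  assert (HX : is_derive (fun t => v t y * pDx psi t y) x
    (pDx v x y * (pDx phi (u x y) (v x y) * pDx u x y + pDy phi (u x y) (v x y) * pDx v x y)
     + v x y * ((pDx (pDx phi) (u x y) (v x y) * pDx u x y + pDy (pDx phi) (u x y) (v x y) * pDx v x y) * pDx u x y
               + pDx phi (u x y) (v x y) * pDx (pDx u) x y
               + (pDx (pDy phi) (u x y) (v x y) * pDx u x y + pDy (pDy phi) (u x y) (v x y) * pDx v x y) * pDx v x y
               + pDy phi (u x y) (v x y) * pDx (pDx v) x y))).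
  { apply (is_derive_ext_loc (fun t => v t y * (pDx phi (u t y) (v t y) * pDx u t y + pDy phi (u t y) (v t y) * pDx v t y))).
    { apply (filter_imp (fun t => Om (t,y))); [|now apply loc_x].
      intros t Ht. now rewrite Hpx. }
    eapply is_derive_eq.
    { apply (dmult (fun t => v t y)); [exact dvx|].
      apply (dplus (fun t => pDx phi (u t y) (v t y) * pDx u t y) (fun t => pDy phi (u t y) (v t y) * pDx v t y));
      apply dmult.
      - apply (chain (fun r => u r y) (fun r => v r y) (pDx phi) x); [auto|exact dux|exact dvx].
      - exact duxx.
      - apply (chain (fun r => u r y) (fun r => v r y) (pDy phi) x); [auto|exact dux|exact dvx].
      - exact dvxx. }
    cbv beta; match goal with |- ?a = ?b => change (@eq R a b) end; ring. }
  assert (HY : is_derive (fun t => v x t * pDy psi x t) y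
    (pDy v x y * (pDx phi (u x y) (v x y) * pDy u x y + pDy phi (u x y) (v x y) * pDy v x y)
     + v x y * ((pDx (pDx phi) (u x y) (v x y) * pDy u x y + pDy (pDx phi) (u x y) (v x y) * pDy v x y) * pDy u x y
               + pDx phi (u x y) (v x y) * pDy (pDy u) x y
               + (pDx (pDy phi) (u x y) (v x y) * pDy u x y + pDy (pDy phi) (u x y) (v x y) * pDy v x y) * pDy v x y
               + pDy phi (u x y) (v x y) * pDy (pDy v) x y))).
  { apply (is_derive_ext_loc (fun t => v x t * (pDx phi (u x t) (v x t) * pDy u x t + pDy phi (u x t) (v x t) * pDy v x t))).
    { apply (filter_imp (fun t => Om (x,t))); [|now apply loc_y].
      intros t Ht. now rewrite Hpy. }
    eapply is_derive_eq.
    { apply (dmult (fun t => v x t)); [exact dvy|].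
      apply (dplus (fun t => pDx phi (u x t) (v x t) * pDy u x t) (fun t => pDy phi (u x t) (v x t) * pDy v x t));
      apply dmult.
      - apply (chain (fun r => u x r) (fun r => v x r) (pDx phi) y); [auto|exact duy|exact dvy].
      - exact duyy.
      - apply (chain (fun r => u x r) (fun r => v x r) (pDy phi) y); [auto|exact duy|exact dvy].
      - exact dvyy. }
    cbv beta; match goal with |- ?a = ?b => change (@eq R a b) end; ring. }
  split; [eexists; exact HX|]. split; [eexists; exact HY|].
  etransitivity; [apply (f_equal2 Rplus); [exact (is_derive_unique _ _ _ HX) | exact (is_derive_unique _ _ _ HY)]|].
  destruct (Hlap x y Hxy) as [L1 L2]. destruct (HCR x y Hxy) as [C1 C2].
  pose proof (Heq _ _ (Hmap x y Hxy)) as E. pose proof (Hnz _ _ (Hmap x y Hxy)) as NZ.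
  set (V := v x y) in *. set (Uu := u x y) in *.
  assert (Exx : pDx (pDx phi) Uu V = - pDy (pDy phi) Uu V - / V * pDy phi Uu V) by lra.
  assert (Euxx : pDx (pDx u) x y = - pDy (pDy u) x y) by lra.
  assert (Evxx : pDx (pDx v) x y = - pDy (pDy v) x y) by lra.
  rewrite Exx, Euxx, Evxx, C1, C2. field. exact NZ.
Qed.
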